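(* Let $S$ be a set and let $d : S \times S \to \{0,1\}$ be a function satisfying, for all $x, x', x'' \in S$: $d(x,x) = 0$, $d(x,x') = d(x',x)$, and $d(x,x'') \le d(x,x') + d(x',x'')$. For a finite sequence $(x_1, \ldots, x_n)$ of elements of $S$ (repetitions allowed), $n \ge 1$, define its discrete uniqueness \[ U_d(x_1,\ldots,x_n) \coloneqq \frac{1}{n}\sum_{i=1}^{n} I\!\left(\bigwedge_{j=1}^{i-1} \bigl(d(x_i,x_j) \neq 0\bigr)\right), \] where $I$ of a proposition is $1$ if the proposition is true and $0$ otherwise (the empty conjunction, for $i=1$, is true). Then for every permutation $\sigma$ of $\{1,\ldots,n\}$, \[ U_d(x_{\sigma(1)},\ldots,x_{\sigma(n)}) = U_d(x_1,\ldots,x_n). \]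
   Context: In the paper, $S$ is a space of crystals, $(x_1,\ldots,x_n)$ is the list of generated samples in generation order, and $d$ is a discrete (0/1-valued) crystal distance function; the theorem states that discrete uniqueness defined via such a $d$ that is a genuine pseudometric is invariant under permutation of the generated samples. *)

(* Defs.v *)
From mathcomp Require Import all_boot all_order all_algebra all_fingroup.
Set Implicit Arguments. Unset Strict Implicit. Unset Printing Implicit Defensive.
Import GRing.Theory Num.Theory.
Local Open Scope ring_scope.

Definition is_discrete_pseudometric (S : Type) (d : S -> S -> nat) : Prop :=
  [/\ forall x y, (d x y <= 1)%N,
      forall x, d x x = 0%N,
      forall x y, d x y = d y x
    & forall x y z, (d x z <= d x y + d y z)%N].

Definition discrete_uniqueness (S : Type) (d : S -> S -> nat) (n : nat)
    (x : 'I_n -> S) : rat :=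
  n%:R^-1 * \sum_(i < n)
    (if [forall j : 'I_n, (j < i)%N ==> (d (x i) (x j) != 0%N)] then 1 else 0).

(* Main.v *)
Require Import Defs.
From mathcomp Require Import all_boot all_order all_algebra all_fingroup.

Import GRing.Theory Num.Theory.

Section Aux.
Variables (S : Type) (d : S -> S -> nat) (n : nat).
Hypothesis hd : is_discrete_pseudometric d.

Definition firstb (y : 'I_n -> S) (i : 'I_n) :=
  [forall j : 'I_n, (j < i)%N ==> (d (y i) (y j) != 0%N)].
Definition cls (y : 'I_n -> S) (i : 'I_n) := [set j | d (y i) (y j) == 0%N].

Lemma dsym a b : (d a b == 0%N) = (d b a == 0%N).
Proof. by case: hd => _ _ hs _; rewrite hs. Qed.
Lemma drefl a : d a a == 0%N.
Proof. by case: hd => _ hr _ _; rewrite hr. Qed.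
Lemma dtrans a b c : d a b == 0%N -> d b c == 0%N -> d a c == 0%N.
Proof.
case: hd => _ _ _ ht /eqP h1 /eqP h2; have := ht a b c.
by rewrite h1 h2 leqn0.
Qed.

Lemma count_cls y : #|[set i | firstb y i]| = #|[set cls y i | i : 'I_n]|.
Proof.
rewrite -(card_in_imset (f := cls y) (D := [set i | firstb y i])).
  apply: eq_card => C; apply/imsetP/imsetP => -[k _ ->].
    by exists k.
  case: (arg_minnP (fun i : 'I_n => i : nat) (P := fun i => d (y k) (y i) == 0%N) (drefl (y k))) => i Hki Hmin.
  exists i.
    rewrite inE; apply/forallP => j; apply/implyP => ltji; apply/negP => Dij.
    have := Hmin j (dtrans _ _ _ Hki Dij); rewrite leqNgt ltji //.
  apply/setP => j; rewrite !inE; apply/idP/idP => H.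
    by apply: (dtrans _ _ _ _ H); rewrite dsym.
  exact: (dtrans _ _ _ Hki H).
move=> i i'; rewrite !inE => fi fi' E.
have key : forall a b, firstb y a -> firstb y b -> cls y a = cls y b -> ~ (a < b)%N.
  move=> a b _ fb Eab lab.
  have : b \in cls y b by rewrite inE drefl.
  rewrite -Eab inE => Dab.
  move/forallP: fb => /(_ a); rewrite lab /= dsym Dab //.
apply/val_inj; case: (ltngtP i i') => // h.
  by case: (key _ _ fi fi' E h).
by case: (key _ _ fi' fi (esym E) h).
Qed.

Local Open Scope ring_scope.
Lemma sum_first y :
  (\sum_(i < n) (if firstb y i then 1 else 0) : rat) = #|[set i | firstb y i]|%:R.
Proof.
rewrite -big_mkcond /= sumr_const; congr (_ *+ _).
by apply: eq_card => i; rewrite inE.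
Qed.

End Aux.

Local Open Scope ring_scope.
Theorem mainTheorem1 (S : Type) (d : S -> S -> nat) (n : nat)
  (hd : is_discrete_pseudometric d) (hn : (1 <= n)%N)
  (x : 'I_n -> S) (sigma : 'S_n) :
  discrete_uniqueness d (fun i => x (sigma i)) = discrete_uniqueness d x.
Proof.
rewrite /discrete_uniqueness; congr (_ * _).
rewrite (sum_first _ d _ (fun i => x (sigma i))) (sum_first _ d _ x).
rewrite !(count_cls _ _ _ hd); congr (_ %:R).
have -> : [set cls _ d _ (fun i => x (sigma i)) i | i : 'I_n]
        = [set sigma @^-1: (A : {set 'I_n}) | A in [set cls _ d _ x i | i : 'I_n]].
  apply/setP => C; apply/imsetP/imsetP.
    case=> i _ ->; exists (cls _ d _ x (sigma i)); first exact: imset_f.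
    by apply/setP => j; rewrite !inE.
  case=> A /imsetP [i _ ->] ->; exists ((sigma^-1)%g i) => //.
  by apply/setP => j; rewrite !inE permKV.
rewrite card_imset //.
move=> A B E; apply/setP => j.
move/setP: E => /(_ ((sigma^-1)%g j)); rewrite !inE permKV //.
Qed.
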